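(* Let $U_1,U_2,\dots$ be i.i.d. almost surely positive random variables distributed as $U$ with tail function $Q(x)=\mathbb{P}(U>x)$, and assume $\mathbb{E}[U^2]<\infty$ and that there exist $\beta\in(0,1/2)$ and $x_0>0$ in the interior of the support of $U$ such that $Q^{1/2-\beta}$ is convex on $[x_0,\infty)$. Let $V_N=\max(U_1,\dots,U_N)$. Then there exists a non-increasing deterministic function $\eta$ on $\mathbb{R}_+$ with $\lim_{y\to+\infty}\eta(y)=0$ such that $\lim_{N\to\infty}\mathbb{P}(B_N)=1$, where $B_N=\{V_N/\sqrt N\le \eta(N)\}$. *)

(* Defs.v *)
From HB Require Import structures.
From mathcomp Require Import all_boot all_order all_algebra.
From mathcomp Require Import all_classical all_reals all_analysis.
Set Implicit Arguments. Unset Strict Implicit. Unset Printing Implicit Defensive.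
Import Order.TTheory GRing.Theory Num.Theory.
Import numFieldNormedType.Exports.
Local Open Scope classical_set_scope.
Local Open Scope ring_scope.

Definition mutually_independent d (T : measurableType d) (R : realType)
  (P : probability T R) (X : nat -> {RV P >-> R}) : Prop :=
  forall (I : seq nat) (B : nat -> set R),
    uniq I -> (forall i, measurable (B i)) ->
    P (\bigcap_(i in [set j | j \in I]) (X i @^-1` B i)) =
    (\prod_(i <- I) P (X i @^-1` B i))%E.

Definition same_distribution d (T : measurableType d) (R : realType)
  (P : probability T R) (X Y : {RV P >-> R}) : Prop :=
  forall B : set R, measurable B -> P (Y @^-1` B) = P (X @^-1` B).

Definition tailQ d (T : measurableType d) (R : realType)
  (P : probability T R) (U : {RV P >-> R}) (x : R) : R :=
  fine (P [set t | x < U t]).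

Definition support_of d (T : measurableType d) (R : realType)
  (P : probability T R) (U : {RV P >-> R}) : set R :=
  [set x : R | forall e : R, 0 < e ->
     (0 < P (U @^-1` [set y : R | (`|y - x| < e)%R]))%E].

Definition convex_on (R : realType) (D : set R) (f : R -> R) : Prop :=
  forall x y t, D x -> D y -> 0 <= t <= 1 ->
    f (t * x + (1 - t) * y) <= t * f x + (1 - t) * f y.

(* V_N = max(U_1, ..., U_N) (indices shifted to start at 0) *)
Definition maxN d (T : measurableType d) (R : realType)
  (P : probability T R) (Us : nat -> {RV P >-> R}) (N : nat) (t : T) : R :=
  \big[Order.max/0]_(i < N) Us i t.

(* Main.v *)
Require Import Defs.
From HB Require Import structures.
From mathcomp Require Import all_boot all_order all_algebra.
From mathcomp Require Import all_classical all_reals all_analysis.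
From mathcomp Require Import measurable_realfun.
From mathcomp Require Import ring lra.
Set Implicit Arguments. Unset Strict Implicit. Unset Printing Implicit Defensive.
Import Order.TTheory GRing.Theory Num.Theory.
Import numFieldNormedType.Exports.
Local Open Scope classical_set_scope.
Local Open Scope ring_scope.

Lemma mgt d (T : measurableType d) (R : realType) (f : T -> R)
  (mf : measurable_fun setT f) (x : R) : measurable [set t | x < f t].
Proof.
have -> : [set t | x < f t] = f @^-1` `]x, +oo[.
  by apply/seteqP; split => t /=; rewrite in_itv /= andbT.
rewrite -[X in measurable X]setTI; apply: mf => //; exact: measurable_itv.
Qed.

Lemma mle d (T : measurableType d) (R : realType) (f : T -> R)
  (mf : measurable_fun setT f) (x : R) : measurable [set t | f t <= x].
Proof.
have -> : [set t | f t <= x] = f @^-1` `]-oo, x].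
  by apply/seteqP; split => t /=; rewrite in_itv /=.
rewrite -[X in measurable X]setTI; apply: mf => //; exact: measurable_itv.
Qed.

Lemma mU2 d (T : measurableType d) (R : realType) (P : probability T R)
  (U : {RV P >-> R}) (D : set T) : measurable_fun D (fun t => ((U t)^+2)%:E).
Proof.
apply/measurable_EFinP; apply: measurable_funX; exact: measurable_funP.
Qed.

Lemma h_ge0 d (T : measurableType d) (R : realType) (P : probability T R)
  (U : {RV P >-> R}) x :
  (0 <= \int[P]_(t in [set t | (x < U t)%R]) ((U t)^+2)%:E)%E.
Proof. by apply: integral_ge0 => t _; rewrite lee_fin sqr_ge0. Qed.

Lemma h_anti d (T : measurableType d) (R : realType) (P : probability T R)
  (U : {RV P >-> R}) x y : x <= y ->
  (\int[P]_(t in [set t | (y < U t)%R]) ((U t)^+2)%:E <=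
   \int[P]_(t in [set t | (x < U t)%R]) ((U t)^+2)%:E)%E.
Proof.
move=> xy; apply: ge0_subset_integral.
- exact: mgt (measurable_funP U) y.
- exact: mgt (measurable_funP U) x.
- exact: mU2.
- by move=> t _; rewrite lee_fin sqr_ge0.
- by move=> t /=; apply: le_lt_trans.
Qed.

Lemma h_leE d (T : measurableType d) (R : realType) (P : probability T R)
  (U : {RV P >-> R}) x :
  (\int[P]_(t in [set t | (x < U t)%R]) ((U t)^+2)%:E <= 'E_P[fun t => (U t ^+ 2)%R])%E.
Proof.
rewrite unlock; apply: ge0_subset_integral => //.
- exact: mgt (measurable_funP U) x.
- exact: mU2.
- by move=> t _; rewrite lee_fin sqr_ge0.
Qed.

Lemma markov2 d (T : measurableType d) (R : realType) (P : probability T R)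
  (U : {RV P >-> R}) x : 0 < x ->
  ((x ^+ 2)%:E * P [set t | (x < U t)%R] <=
   \int[P]_(t in [set t | (x < U t)%R]) ((U t)^+2)%:E)%E.
Proof.
move=> x0; have mA := mgt (measurable_funP U) x.
rewrite -integral_cst //; apply: ge0_le_integral => //.
- by move=> t _; rewrite lee_fin sqr_ge0.
- exact: mU2.
- move=> t /= xU; rewrite lee_fin; apply: lerXn2r; rewrite ?nnegrE ?ltW //.
  exact: lt_trans xU.
Qed.

Lemma h_cvg d (T : measurableType d) (R : realType) (P : probability T R)
  (U : {RV P >-> R}) :
  ('E_P[fun t => (U t ^+ 2)%R] < +oo)%E ->
  (\int[P]_(t in [set t | (n%:R < U t)%R]) ((U t)^+2)%:E)%E @[n --> \oo] --> 0%E.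
Proof.
move=> EU.
pose g := fun t => ((U t)^+2)%:E : \bar R.
pose f_ := fun n : nat => g \_ [set t | (n%:R < U t)%R].
have mA n : measurable [set t | (n%:R < U t)%R] := mgt (measurable_funP U) _.
have -> : (fun n : nat => \int[P]_(t in [set t | (n%:R < U t)%R]) ((U t)^+2)%:E)%E
    = (fun n => \int[P]_(t in setT) f_ n t)%E.
  by apply/funext => n; rewrite integral_mkcond.
have [] := @dominated_convergence _ _ _ P setT measurableT f_ (cst 0%E) g.
- by move=> n; apply/(measurable_restrictT _ (mA n)); exact: mU2.
- exact: measurable_cst.
- apply: aeW => t _; apply: cvg_near_cst.
  exists (Num.truncn (U t)).+1 => // n /= Nn.
  rewrite /f_ patchE ifF //; apply/negbTE; apply/negP; rewrite inE /= => H.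
  have := lt_le_trans (truncnS_gt (U t)) (_ : _ <= n%:R :> R); rewrite ler_nat => /(_ Nn) /(lt_trans H); by rewrite ltxx.
- apply/integrableP; split; first exact: mU2.
  under eq_integral => t _ do rewrite gee0_abs ?lee_fin ?sqr_ge0 //.
  by move: EU; rewrite unlock.
- apply: aeW => t n _; rewrite /f_ patchE; case: ifP => _.
    by rewrite gee0_abs // lee_fin sqr_ge0.
  by rewrite abse0 lee_fin sqr_ge0.
- by move=> _ _; rewrite integral0.
Qed.


Lemma mmax d (T : measurableType d) (R : realType) (P : probability T R)
  (Us : nat -> {RV P >-> R}) N : measurable_fun setT (maxN Us N).
Proof.
rewrite /maxN.
elim: (index_enum 'I_N) => [|i s IH].
  under eq_fun do rewrite big_nil.
  exact: measurable_cst.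
under eq_fun do rewrite big_cons.
apply: (@measurable_maxr _ _ _ _ (fun t => Us i t)) => //; exact: measurable_funP.
Qed.

Lemma tail_ub d (T : measurableType d) (R : realType) (P : probability T R)
  (U : {RV P >-> R}) (Us : nat -> {RV P >-> R}) :
  (forall n, same_distribution U (Us n)) ->
  forall N (c : R), 0 <= c ->
  fine (P [set t | c < maxN Us N t]) <= N%:R * fine (P [set t | c < U t]).
Proof.
move=> sd N c c0.
have mF k : measurable [set t | c < Us k t] := mgt (measurable_funP (Us k)) c.
have eF k : P [set t | c < Us k t] = P [set t | c < U t].
  have e1 (V : {RV P >-> R}) : [set t | c < V t] = V @^-1` `]c, +oo[.
    by apply/seteqP; split => t /=; rewrite in_itv /= andbT.
  rewrite !e1; apply: sd; exact: measurable_itv.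
have H : (P [set t | (c < maxN Us N t)%R] <= \sum_(k < N) P [set t | (c < Us k t)%R])%E.
  apply: (@content_subadditive _ _ _ P _ (fun k => [set t | (c < Us k t)%R]) N).
  - by move=> k _; exact: mF.
  - exact: mgt (mmax Us N) c.
  move=> t /= ct; rewrite -(bigcup_mkord N (fun k => [set t | (c < Us k t)%R])).
  apply: contrapT => nH; move: ct; apply/negP; rewrite -leNgt.
  apply: bigmax_le => // i _; rewrite leNgt; apply/negP => ci.
  by apply: nH; exists i => //=.
have fU : P [set t | c < U t] \is a fin_num.
  by apply: fin_num_measure; exact: mgt (measurable_funP U) c.
move: H; under eq_bigr => k _ do rewrite eF -(fineK fU).
rewrite sumEFin sumr_const card_ord => H.
rewrite -lee_fin fineK; last by apply: fin_num_measure; exact: mgt (mmax Us N) c.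
by rewrite mulr_natl.
Qed.

Definition hr d (T : measurableType d) (R : realType) (P : probability T R)
  (U : {RV P >-> R}) (x : R) : R :=
  fine (\int[P]_(t in [set t | (x < U t)%R]) ((U t)^+2)%:E)%E.

Definition qf (R : realType) (y : R) : R := Num.sqrt (Num.sqrt (Num.max y 1)).

Definition etaf d (T : measurableType d) (R : realType) (P : probability T R)
  (U : {RV P >-> R}) (y : R) : R :=
  Num.sqrt (Num.sqrt (hr U (qf y))) + (qf y)^-1.

Lemma h_fin d (T : measurableType d) (R : realType) (P : probability T R)
  (U : {RV P >-> R}) x :
  ('E_P[fun t => (U t ^+ 2)%R] < +oo)%E ->
  (\int[P]_(t in [set t | (x < U t)%R]) ((U t)^+2)%:E)%E \is a fin_num.
Proof.
move=> EU; rewrite ge0_fin_numE; last exact: h_ge0.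
exact: le_lt_trans (h_leE U x) EU.
Qed.

Lemma hr_ge0 d (T : measurableType d) (R : realType) (P : probability T R)
  (U : {RV P >-> R}) x : 0 <= hr U x.
Proof. by apply: fine_ge0; exact: h_ge0. Qed.

Lemma hr_anti d (T : measurableType d) (R : realType) (P : probability T R)
  (U : {RV P >-> R}) x y :
  ('E_P[fun t => (U t ^+ 2)%R] < +oo)%E -> x <= y -> hr U y <= hr U x.
Proof.
move=> EU xy; apply: fine_le; try exact: h_fin.
exact: h_anti.
Qed.

Lemma qf_ge1 (R : realType) (y : R) : 1 <= qf y.
Proof.
have h1 : 1 <= Num.max y 1 by rewrite le_max lexx orbT.
have h2 : 1 <= Num.sqrt (Num.max y 1).
  by rewrite -[leLHS]sqrtr1 ler_sqrt ?(le_trans ler01 h1).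
by rewrite /qf -[leLHS]sqrtr1 ler_sqrt ?(le_trans ler01 h2).
Qed.

Lemma qf_mono (R : realType) (x y : R) : x <= y -> qf x <= qf y.
Proof.
move=> xy; rewrite /qf ler_sqrt ?sqrtr_ge0 // ler_sqrt; last first.
  by rewrite le_max ler01 orbT.
by rewrite ge_max !le_max xy lexx !orbT.
Qed.

Lemma qf_big (R : realType) (z y : R) : 0 <= z -> z ^+ 4 <= y -> z <= qf y.
Proof.
move=> z0 zy.
have -> : z = Num.sqrt (Num.sqrt (z ^+ 4)).
  have -> : z ^+ 4 = (z ^+ 2) ^+ 2 by rewrite -exprM.
  by rewrite sqrtr_sqr ger0_norm ?sqr_ge0 // sqrtr_sqr ger0_norm.
rewrite /qf ler_sqrt ?sqrtr_ge0 // ler_sqrt; last by rewrite le_max ler01 orbT.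
by rewrite le_max zy.
Qed.

Lemma qf_nat (R : realType) (n : R) : 1 <= n -> qf n ^+ 2 = Num.sqrt n.
Proof.
move=> n1; rewrite /qf sqr_sqrtr ?sqrtr_ge0 //.
by rewrite (_ : Num.max n 1 = n) //; apply/max_idPl.
Qed.

Lemma etaf_anti d (T : measurableType d) (R : realType) (P : probability T R)
  (U : {RV P >-> R}) x y :
  ('E_P[fun t => (U t ^+ 2)%R] < +oo)%E -> x <= y -> etaf U y <= etaf U x.
Proof.
move=> EU xy; rewrite /etaf; apply: lerD.
  rewrite ler_sqrt ?sqrtr_ge0 // ler_sqrt ?hr_ge0 //.
  by apply: hr_anti => //; exact: qf_mono.
have q1 := qf_ge1 x; have q2 := qf_ge1 y.
rewrite lef_pV2 ?qf_mono // posrE (lt_le_trans ltr01) //.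
Qed.

Lemma hr_small d (T : measurableType d) (R : realType) (P : probability T R)
  (U : {RV P >-> R}) (eps : R) :
  ('E_P[fun t => (U t ^+ 2)%R] < +oo)%E -> 0 < eps ->
  exists M : R, 0 <= M /\ forall x, M <= x -> hr U x < eps.
Proof.
move=> EU e0.
have /fine_cvgP[_ H] := h_cvg EU.
move: H => /cvgr_lt H.
have [N _ HN] := H _ e0.
exists N%:R; split => // x Nx.
have := HN N (leqnn N) => /= HN'.
exact: le_lt_trans (@hr_anti _ _ _ _ U _ _ EU Nx) HN'.
Qed.

Lemma key d (T : measurableType d) (R : realType) (P : probability T R)
  (U : {RV P >-> R}) (Us : nat -> {RV P >-> R}) :
  (forall n, same_distribution U (Us n)) ->
  ('E_P[fun t => (U t ^+ 2)%R] < +oo)%E ->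
  forall N : nat, (0 < N)%N ->
  fine (P [set t | etaf U N%:R * Num.sqrt N%:R < maxN Us N t])
    <= Num.sqrt (hr U (qf N%:R)).
Proof.
move=> sd EU N N0.
set n : R := N%:R.
have n1 : 1 <= n by rewrite /n ler1n.
set q := qf n; set e := etaf U n; set s := Num.sqrt n; set H := hr U q.
have q1 : 1 <= q := qf_ge1 n.
have q0 : 0 < q := lt_le_trans ltr01 q1.
have qq : q ^+ 2 = s := qf_nat n1.
have s0 : 0 < s by rewrite sqrtr_gt0 (lt_le_trans ltr01).
have ss : s ^+ 2 = n by rewrite sqr_sqrtr // (le_trans ler01).
have H0 : 0 <= H := hr_ge0 U q.
have eA : e = Num.sqrt (Num.sqrt H) + q^-1 by [].
have A0 : 0 <= Num.sqrt (Num.sqrt H) := sqrtr_ge0 _.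
have qe : q^-1 <= e by rewrite eA lerDr.
have e0 : 0 < e by apply: lt_le_trans qe; rewrite invr_gt0.
have cq : q <= e * s.
  have -> : q = q^-1 * s by rewrite -qq expr2 mulrA mulVf ?mul1r // gt_eqF.
  by rewrite ler_wpM2r // ltW.
set c := e * s.
have c0 : 0 < c by rewrite mulr_gt0.
have mA := mgt (measurable_funP U) c.
have fA : P [set t | c < U t] \is a fin_num by exact: fin_num_measure.
set p := fine (P [set t | c < U t]).
have p0 : 0 <= p by apply: fine_ge0.
have mk : c ^+ 2 * p <= H.
  have := markov2 U c0; rewrite -(fineK fA) -EFinM.
  rewrite -(fineK (h_fin c EU)) lee_fin => /le_trans; apply.
  exact: hr_anti.
have tb := tail_ub sd N (ltW c0).
have e2 : Num.sqrt H <= e ^+ 2.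
  rewrite -[leLHS](@sqr_sqrtr _ (Num.sqrt H)) ?sqrtr_ge0 //.
  apply: lerXn2r; rewrite ?nnegrE ?sqrtr_ge0 ?(ltW e0) //.
  by rewrite eA lerDl invr_ge0 ltW.
have sH : Num.sqrt H ^+ 2 = H by rewrite sqr_sqrtr.
have csq : c ^+ 2 = e ^+ 2 * n by rewrite /c exprMn ss.
apply: (le_trans tb).
have sH0 : 0 <= Num.sqrt H := sqrtr_ge0 _.
rewrite csq in mk.
have np0 : 0 <= n * p by rewrite mulr_ge0 // (le_trans ler01).
rewrite -/p; move: mk e2 sH np0 e0 sH0 p0 n1.
set X := n * p; set E := e ^+ 2; set Y := Num.sqrt H.
move=> mk e2 sH np0 e0' sH0 p0 n1'.
have E0 : 0 < E by rewrite /E exprn_gt0.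
have mk' : X * E <= H by rewrite /X mulrC mulrA; rewrite mulrC in mk; lra.
rewrite leNgt; apply/negP => XY.
have : Y * E < X * E by rewrite ltr_pM2r.
have : Y * Y <= Y * E by rewrite ler_wpM2l.
rewrite -expr2 sH; lra.
Qed.

Lemma sqrt_lt (R : realType) (x a : R) : 0 < a -> x < a ^+ 2 -> Num.sqrt x < a.
Proof.
move=> a0 xa.
have -> : a = Num.sqrt (a ^+ 2) by rewrite sqrtr_sqr ger0_norm // ltW.
by rewrite ltr_sqrt // exprn_gt0.
Qed.

Lemma sqrt4_lt (R : realType) (x a : R) : 0 < a -> x < a ^+ 4 ->
  Num.sqrt (Num.sqrt x) < a.
Proof.
move=> a0 xa; apply: sqrt_lt => //; apply: sqrt_lt; first exact: exprn_gt0.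
by rewrite -exprM.
Qed.

Theorem lemma3 (d : measure_display) (T : measurableType d) (R : realType)
  (P : probability T R) (U : {RV P >-> R}) (Us : nat -> {RV P >-> R})
  (beta x0 : R) :
  mutually_independent Us ->
  (forall n, same_distribution U (Us n)) ->
  {ae P, forall t, (0 < U t)%R} ->
  ('E_P[fun t => (U t ^+ 2)%R] < +oo)%E ->
  0 < beta < 1 / 2 ->
  0 < x0 ->
  interior (support_of U) x0 ->
  convex_on `[x0, +oo[ (fun x => tailQ U x `^ (1 / 2 - beta)) ->
  exists eta : R -> R,
    {in `[0, +oo[ &, {homo eta : x y /~ x <= y}} /\
    eta y @[y --> +oo] --> 0 /\
    P [set t | maxN Us N t / Num.sqrt N%:R <= eta N%:R] @[N --> \oo] --> 1%E.
Proof.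
move=> _ sd _ EU _ _ _ _.
exists (etaf U); split.
  by move=> x y _ _ xy; exact: etaf_anti.
split.
  apply/cvgr0Pnorm_lt => eps e0.
  have e20 : 0 < eps / 2 by rewrite divr_gt0.
  have [M [M0 HM]] := hr_small EU (exprn_gt0 4 e20).
  set Z := M + 2 / eps + 1.
  have Z0 : 0 <= Z by rewrite /Z !addr_ge0 // ltW // divr_gt0.
  exists (Z ^+ 4); split; first exact: num_real.
  move=> y Zy.
  have qZ : Z <= qf y by apply: qf_big => //; exact: ltW.
  have q1 := qf_ge1 y.
  have q0 : 0 < qf y := lt_le_trans ltr01 q1.
  rewrite ger0_norm; last by rewrite addr_ge0 ?sqrtr_ge0 // invr_ge0 ltW.
  have h1 : Num.sqrt (Num.sqrt (hr U (qf y))) < eps / 2.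
    apply: sqrt4_lt => //; apply: HM.
    by apply: le_trans qZ; rewrite /Z -addrA lerDl addr_ge0 // ltW // divr_gt0.
  have h2 : (qf y)^-1 < eps / 2.
    rewrite -[eps / 2]invrK ltf_pV2 ?posrE ?invr_gt0 //.
    rewrite invf_div; apply: lt_le_trans qZ.
    rewrite /Z; lra.
  rewrite /etaf; lra.
apply: cvg_EFin.
  apply: nearW => N; apply: fin_num_measure.
  apply: (@mle _ _ _ (fun t => maxN Us N t * (Num.sqrt N%:R)^-1)).
  apply: measurable_funM; [exact: mmax | exact: measurable_cst].
apply/cvgrPdist_lt => eps e0.
have [M [M0 HM]] := hr_small EU (exprn_gt0 2 e0).
exists (Num.truncn (M ^+ 4)).+1 => // N /= KN.
have N0 : (0 < N)%N by apply: leq_trans KN.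
have n0 : 0 < (N%:R : R) by rewrite ltr0n.
set B := [set t | etaf U N%:R * Num.sqrt N%:R < maxN Us N t].
have mB : measurable B := mgt (mmax Us N) _.
have -> : [set t | maxN Us N t / Num.sqrt N%:R <= etaf U N%:R] = ~` B.
  apply/seteqP; split => t /=.
    by rewrite ler_pdivrMr ?sqrtr_gt0 // leNgt => /negP.
  by rewrite ler_pdivrMr ?sqrtr_gt0 // leNgt => /negP.
have fB : P B \is a fin_num by exact: fin_num_measure.
rewrite probability_setC // fineB // ?fin_numE //= opprB addrC subrK.
have b0 : 0 <= fine (P B) by apply: fine_ge0.
rewrite ger0_norm //.
apply: le_lt_trans (key sd EU N0) _.
apply: sqrt_lt => //; apply: HM; apply: qf_big => //.
apply/ltW; apply: lt_le_trans (truncnS_gt _) _.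
by rewrite ler_nat.
Qed.
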